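(* Let $p\in[1,\infty]$, $d\in\mathbb N$, $m_0:=d$, $m_1\le m_2\le\cdots$ positive integers, $\mathbf W_n\in\mathbb R^{m_n\times m_{n-1}}$ and $\mathbf b_n\in\mathbb R^{m_n}$ for $n\in\mathbb N$. If $\mathbf W_n=\mathbf I_{m_n,m_{n-1}}+\mathbf P_n$ for all $n\ge1$ with $\sum_{n=1}^\infty\|\mathbf P_n\|_p<\infty$, and $\sum_{n=1}^\infty\|\mathbf b_n\|_p<\infty$, then the ReLU networks $\mathcal N_n$ converge pointwise on $[0,1]^d$, i.e. for each $x\in[0,1]^d$ the sequence $\tilde{\mathcal N}_n(x)$ converges in $\ell^p$.
   Context: $\sigma(t)=\max(t,0)$ applied componentwise; $\mathcal N_n(x):=\big(\sigma(\mathbf W_n\cdot+\mathbf b_n)\circ\cdots\circ\sigma(\mathbf W_1\cdot+\mathbf b_1)\big)(x)\in\mathbb R^{m_n}$ for $x\in[0,1]^d$, and $\tilde{\mathcal N}_n(x)\in\ell^p$ is the sequence whose first $m_n$ entries are those of $\mathcal N_n(x)$ and whose remaining entries are $0$. $\|\cdot\|_p$ denotes the $\ell^p$ norm on vectors and the induced operator norm on matrices. For $m'\ge m$, $\mathbf I_{m',m}$ is the $m'\times m$ matrix whose top $m\times m$ block is the identity and whose remaining entries are zero. *)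

(* Defs.v *)
From HB Require Import structures.
From mathcomp Require Import all_boot all_order all_algebra.
From mathcomp Require Import all_classical all_reals all_analysis.
Set Implicit Arguments. Unset Strict Implicit. Unset Printing Implicit Defensive.
Import Order.TTheory GRing.Theory Num.Theory.
Local Open Scope ring_scope.

(* Exponent p in [1, oo] is represented as an extended real p : \bar R with
   (1 <= p)%E; p = +oo is the sup-norm case. *)

Definition vnorm {R : realType} (p : \bar R) {n : nat} (v : 'cV[R]_n) : R :=
  match p with
  | r%:E => (\sum_(i < n) `|v i 0| `^ r) `^ r^-1
  | _ => \big[Num.max/0]_(i < n) `|v i 0|
  end.

Definition opnorm {R : realType} (p : \bar R) {m n : nat} (A : 'M[R]_(m, n)) : R :=
  sup [set vnorm p (A *m x) | x in [set x : 'cV[R]_n | vnorm p x <= 1]].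

Definition lpnorm {R : realType} (p : \bar R) (y : nat -> R) : \bar R :=
  match p with
  | r%:E => poweR (\sum_(0 <= i <oo) ((`|y i| `^ r)%:E))%E r^-1
  | _ => ereal_sup [set (`|y i|)%:E | i in [set: nat]]
  end.

Definition Imat {R : realType} (m' m : nat) : 'M[R]_(m', m) :=
  \matrix_(i, j) ((nat_of_ord i == nat_of_ord j)%:R).

Definition relu {R : realType} {k : nat} (v : 'cV[R]_k) : 'cV[R]_k :=
  map_mx (fun t => Num.max t 0) v.

(* N_n(x); W n is the weight W_{n+1} : R^{m_n} -> R^{m_{n+1}}, b n is b_{n+1} *)
Fixpoint network {R : realType} (m : nat -> nat)
  (W : forall n, 'M[R]_(m n.+1, m n)) (b : forall n, 'cV[R]_(m n.+1))
  (x : 'cV[R]_(m 0%N)) (n : nat) : 'cV[R]_(m n) :=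
  match n with
  | 0 => x
  | k.+1 => relu (W k *m network W b x k + b k)
  end.

Definition extend {R : realType} {k : nat} (v : 'cV[R]_k) : nat -> R :=
  fun i => match insub i with Some j => v j 0 | None => 0 end.

(* Main.v *)
Require Import Defs.
From HB Require Import structures.
From mathcomp Require Import all_boot all_order all_algebra.
From mathcomp Require Import all_classical all_reals all_analysis.
From mathcomp Require Import ring lra.
Import Order.TTheory GRing.Theory Num.Theory.
Local Open Scope classical_set_scope.
Local Open Scope ring_scope.

Section S.
Context {R : realType}.
Implicit Types (r s C : R).

Lemma powR_conv (r t x y : R) : 1 <= r -> 0 <= t -> t <= 1 -> 0 <= x -> 0 <= y ->
  (t*x + (1-t)*y) `^ r <= t * x`^r + (1-t) * y`^r.
Proof.
move=> r1 t0 t1 x0 y0.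
have := @convex_powR R r r1 (Itv01 t0 t1) x y.
rewrite !convRE /=.
apply; rewrite inE /= in_itv /= andbT //.
Qed.

Lemma powRK {r s} : 0 < r -> 0 <= s -> (s `^ r^-1) `^ r = s.
Proof. by move=> r0 s0; rewrite -powRrM mulVf ?gt_eqF // powRr1. Qed.

Lemma powRK' {r s} : 0 < r -> 0 <= s -> (s `^ r) `^ r^-1 = s.
Proof. by move=> r0 s0; rewrite -powRrM mulfV ?gt_eqF // powRr1. Qed.

Lemma powR_le r x y : 0 <= r -> 0 <= x -> x <= y -> x `^ r <= y `^ r.
Proof.
move=> r0 x0 xy; apply: (ge0_ler_powR r0) => //; rewrite nnegrE //.
exact: le_trans xy.
Qed.

Lemma powRinv_leP r s C : 0 < r -> 0 <= s -> 0 <= C ->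
  (s `^ r^-1 <= C) = (s <= C `^ r).
Proof.
move=> r0 s0 C0; apply/idP/idP => h.
  by rewrite -(powRK r0 s0); apply: powR_le => //; [exact: ltW|exact: powR_ge0].
by rewrite -(powRK' r0 C0); apply: powR_le => //; rewrite ?invr_ge0 ?ltW.
Qed.

Section fin.
Context {k : nat}.
Definition ssum r (f : 'I_k -> R) := \sum_i `|f i| `^ r.
Definition fnorm r (f : 'I_k -> R) := (ssum r f) `^ r^-1.

Lemma ssum_ge0 r f : 0 <= ssum r f.
Proof. by apply: sumr_ge0 => i _; apply: powR_ge0. Qed.

Lemma fnorm_ge0 r f : 0 <= fnorm r f.
Proof. exact: powR_ge0. Qed.

Lemma fnorm_coord r f i : 0 < r -> `|f i| <= fnorm r f.
Proof.
move=> r0; rewrite /fnorm.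
rewrite -(powRK' r0 (normr_ge0 (f i))).
apply: powR_le; [by rewrite invr_ge0 ltW|exact: powR_ge0|].
rewrite /ssum (bigD1 i) //= lerDl; apply: sumr_ge0 => j _; exact: powR_ge0.
Qed.

Lemma fnorm_mono r f g : 0 < r -> (forall i, `|f i| <= `|g i|) -> fnorm r f <= fnorm r g.
Proof.
move=> r0 h; apply: powR_le; [by rewrite invr_ge0 ltW|exact: ssum_ge0|].
apply: ler_sum => i _; apply: powR_le => //; exact: ltW.
Qed.

Lemma fnorm_scale r c f : 0 < r -> fnorm r (fun i => c * f i) = `|c| * fnorm r f.
Proof.
move=> r0; rewrite /fnorm /ssum.
under eq_bigr do rewrite normrM powRM //.
rewrite -mulr_sumr powRM ?powR_ge0 //; last by apply: sumr_ge0 => i _; exact: powR_ge0.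
by rewrite powRK'.
Qed.

Lemma fnorm_eq0 r f : 0 < r -> fnorm r f = 0 -> forall i, f i = 0.
Proof.
move=> r0 h i; apply/normr0_eq0/le_anti; rewrite normr_ge0 andbT -h.
exact: fnorm_coord.
Qed.

Lemma ssum_tri_aux r (A B : R) f g : 1 <= r -> 0 < A -> 0 < B ->
  ssum r f = A `^ r -> ssum r g = B `^ r ->
  ssum r (fun i => f i + g i) <= (A + B) `^ r.
Proof.
move=> r1 Ap Bp hA hB.
have r0 : 0 < r by apply: lt_le_trans r1.
have ABp : 0 < A + B by rewrite addr_gt0.
pose t := A / (A + B).
have t0 : 0 <= t by rewrite divr_ge0 ?ltW.
have t1 : t <= 1 by rewrite ler_pdivrMr // mul1r lerDl ltW.
have e1t : 1 - t = B / (A + B).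
  by rewrite /t; field; rewrite gt_eqF.
have nA : \sum_i (`|f i| / A) `^ r = 1.
  rewrite (eq_bigr (fun i => `|f i| `^ r * A^-1 `^ r)); last first.
    by move=> i _; rewrite powRM ?normr_ge0 ?invr_ge0 ?ltW.
  rewrite -mulr_suml -/(ssum r f) hA -powRM ?invr_ge0 ?ltW //.
  by rewrite mulfV ?gt_eqF // powR1.
have nB : \sum_i (`|g i| / B) `^ r = 1.
  rewrite (eq_bigr (fun i => `|g i| `^ r * B^-1 `^ r)); last first.
    by move=> i _; rewrite powRM ?normr_ge0 ?invr_ge0 ?ltW.
  rewrite -mulr_suml -/(ssum r g) hB -powRM ?invr_ge0 ?ltW //.
  by rewrite mulfV ?gt_eqF // powR1.
apply: (@le_trans _ _ (\sum_i (A+B) `^ r * (t * (`|f i| / A) `^ r + (1 - t) * (`|g i| / B) `^ r))).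
  apply: ler_sum => i _.
  apply: (@le_trans _ _ ((`|f i| + `|g i|) `^ r)).
    apply: powR_le; [exact: ltW | exact: normr_ge0 | exact: ler_normD].
  have -> : `|f i| + `|g i| = (A + B) * (t * (`|f i| / A) + (1 - t) * (`|g i| / B)).
    by rewrite e1t /t; field; rewrite !gt_eqF.
  rewrite (powRM _ (ltW ABp)); last first.
    by apply: addr_ge0; apply: mulr_ge0; rewrite ?subr_ge0 //; apply: divr_ge0 => //; apply: ltW.
  apply: ler_wpM2l; first exact: powR_ge0.
  by apply: powR_conv => //; apply: divr_ge0 => //; apply: ltW.
rewrite -mulr_sumr big_split /= -!mulr_sumr nA nB !mulr1 subrKC mulr1 //.
Qed.

Lemma fnorm_triangle r f g : 1 <= r ->
  fnorm r (fun i => f i + g i) <= fnorm r f + fnorm r g.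
Proof.
move=> r1; have r0 : 0 < r by apply: lt_le_trans r1.
have A0 : 0 <= fnorm r f by exact: fnorm_ge0.
have B0 : 0 <= fnorm r g by exact: fnorm_ge0.
have [Ae|Anz] := eqVneq (fnorm r f) 0.
  have fz := fnorm_eq0 _ _ r0 Ae.
  rewrite Ae add0r; apply: fnorm_mono => // i; by rewrite fz add0r.
have [Be|Bnz] := eqVneq (fnorm r g) 0.
  have gz := fnorm_eq0 _ _ r0 Be.
  rewrite Be addr0; apply: fnorm_mono => // i; by rewrite gz addr0.
have Ap : 0 < fnorm r f by rewrite lt_def Anz A0.
have Bp : 0 < fnorm r g by rewrite lt_def Bnz B0.
have h := ssum_tri_aux r _ _ f g r1 Ap Bp (esym (powRK r0 (ssum_ge0 r f)))
  (esym (powRK r0 (ssum_ge0 r g))).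
have := powRinv_leP _ _ _ r0 (ssum_ge0 r (fun i => f i + g i)) (addr_ge0 A0 B0).
by rewrite h => /idP.
Qed.

End fin.
Lemma fnorm_ext {k} r (f g : 'I_k -> R) : (forall i, f i = g i) -> fnorm r f = fnorm r g.
Proof. by move=> h; congr fnorm; apply/funext. Qed.

Lemma bigmax_ge0 k (F : 'I_k -> R) : (forall i, 0 <= F i) -> 0 <= \big[Num.max/0]_i F i.
Proof. move=> h; elim/big_ind: _ => // x y hx hy; by rewrite le_max hx. Qed.

Definition tn (p : \bar R) K (z : nat -> R) := vnorm p (\col_(i < K) z i).

Lemma extend_in {k} (v : 'cV[R]_k) i (h : (i < k)%N) : extend v i = v (Ordinal h) 0.
Proof. by rewrite /extend insubT. Qed.

Lemma extend_out {k} (v : 'cV[R]_k) i : (k <= i)%N -> extend v i = 0.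
Proof. by move=> h; rewrite /extend insubF // ltnNge h. Qed.

Lemma col_extend {k} (v : 'cV[R]_k) : \col_(i < k) extend v i = v.
Proof. by apply/matrixP => i j; rewrite ord1 mxE /extend valK. Qed.

Section vn.
Context {p : \bar R}.
Hypothesis hp : (1 <= p)%E.

Lemma pcases : (exists2 r, 1 <= r & p = r%:E) \/ p = +oo%E.
Proof.
case: p hp => [r| |] h; [left; exists r => //| by right | by []].
Qed.

Lemma vnorm_ge0 {k} (v : 'cV[R]_k) : 0 <= vnorm p v.
Proof.
case: pcases => [[r r1 ->]|->]; first exact: fnorm_ge0.
by apply: bigmax_ge0.
Qed.

Lemma vnorm_coord {k} (v : 'cV[R]_k) i : `|v i 0| <= vnorm p v.
Proof.
case: pcases => [[r r1 ->]|->]; first by apply: (fnorm_coord r (fun i => v i 0)); apply: lt_le_trans r1.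
exact: (le_bigmax _ (fun i => `|v i 0|)).
Qed.

Lemma vnorm_mono {k} (u v : 'cV[R]_k) : (forall i, `|u i 0| <= `|v i 0|) -> vnorm p u <= vnorm p v.
Proof.
move=> h; case: pcases => [[r r1 ->]|->].
  by apply: (fnorm_mono r (fun i => u i 0) (fun i => v i 0)) => //; apply: lt_le_trans r1.
apply: bigmax_le; first by apply: bigmax_ge0.
move=> i _; apply: le_trans (h i) _; exact: (le_bigmax _ (fun i => `|v i 0|)).
Qed.

Lemma vnorm_scale {k} c (v : 'cV[R]_k) : vnorm p (c *: v) <= `|c| * vnorm p v.
Proof.
case: pcases => [[r r1 ->]|->].
  change (fnorm r (fun i => (c *: v) i 0) <= `|c| * fnorm r (fun i => v i 0)).
  rewrite -(fnorm_scale r c (fun i => v i 0)); last by apply: lt_le_trans r1.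
  by rewrite (@fnorm_ext _ r (fun i => (c *: v) i 0) (fun i => c * v i 0)) // => i; rewrite mxE.
apply: bigmax_le; first by rewrite mulr_ge0 // bigmax_ge0.
move=> i _; rewrite mxE normrM ler_wpM2l //; exact: (le_bigmax _ (fun i => `|v i 0|)).
Qed.

Lemma vnorm_triangle {k} (u v : 'cV[R]_k) : vnorm p (u + v) <= vnorm p u + vnorm p v.
Proof.
case: pcases => [[r r1 ->]|->].
  change (fnorm r (fun i => (u + v) i 0) <= fnorm r (fun i => u i 0) + fnorm r (fun i => v i 0)).
  apply: le_trans (fnorm_triangle r (fun i => u i 0) (fun i => v i 0) r1).
  by rewrite (@fnorm_ext _ r (fun i => (u + v) i 0) (fun i => u i 0 + v i 0)) // => i; rewrite mxE.
apply: bigmax_le; first by rewrite addr_ge0 // bigmax_ge0.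
move=> i _; rewrite mxE (le_trans (ler_normD _ _)) // lerD //;
  exact: (le_bigmax _ (fun i => `|_ i 0|)).
Qed.

Lemma vnorm0 {k} : vnorm p (0 : 'cV[R]_k) = 0.
Proof.
apply/le_anti; rewrite vnorm_ge0 andbT.
by have := vnorm_scale 0 (0 : 'cV[R]_k); rewrite scale0r normr0 mul0r.
Qed.

Lemma vnorm_eq0 {k} (v : 'cV[R]_k) : vnorm p v = 0 -> v = 0.
Proof.
move=> h; apply/matrixP => i j; rewrite ord1 mxE; apply/normr0_eq0/le_anti.
by rewrite normr_ge0 andbT -h vnorm_coord.
Qed.


Lemma vnorm_const_bound {k} (v : 'cV[R]_k) c : 0 <= c -> (forall i, `|v i 0| <= c) ->
  vnorm p v <= c * vnorm p (const_mx 1 : 'cV[R]_k).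
Proof.
move=> c0 h; rewrite -{1}(ger0_norm c0); apply: le_trans (vnorm_scale c _).
by apply: vnorm_mono => i; rewrite !mxE mulr1 (ger0_norm c0); exact: h.
Qed.

Lemma opnorm_bound {m n} (A : 'M[R]_(m, n)) (x : 'cV[R]_n) :
  vnorm p (A *m x) <= opnorm p A * vnorm p x.
Proof.
set E := [set vnorm p (A *m x) | x in [set x : 'cV[R]_n | vnorm p x <= 1]].
have hub : has_ubound E.
  exists ((\sum_i \sum_j `|A i j|) * vnorm p (const_mx 1 : 'cV[R]_m)).
  move=> _ [y /= hy <-]; apply: vnorm_const_bound.
    by apply: sumr_ge0 => i _; apply: sumr_ge0.
  move=> i; rewrite mxE (le_trans (ler_norm_sum _ _ _)) //.
  apply: (@le_trans _ _ (\sum_j `|A i j|)).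
    apply: ler_sum => j _; rewrite normrM -{2}(mulr1 `|A i j|) ler_wpM2l //.
    exact: le_trans (vnorm_coord y j) hy.
  by rewrite (bigD1 i) //= lerDl; apply: sumr_ge0 => l _; apply: sumr_ge0.
have [x0|xnz] := eqVneq (vnorm p x) 0.
  by rewrite x0 (vnorm_eq0 _ x0) mulmx0 vnorm0 mulr0.
have xp : 0 < vnorm p x by rewrite lt_def xnz vnorm_ge0.
set a := vnorm p x.
have hu : vnorm p (a^-1 *: x) <= 1.
  apply: le_trans (vnorm_scale _ _) _.
  by rewrite ger0_norm ?invr_ge0 ?vnorm_ge0 // mulVf ?gt_eqF.
have hE : vnorm p (A *m (a^-1 *: x)) <= opnorm p A by apply: ub_le_sup => //; exists (a^-1 *: x).
have -> : A *m x = a *: (A *m (a^-1 *: x)) by rewrite scalemxAr scalerA mulfV ?gt_eqF // scale1r.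
apply: le_trans (vnorm_scale _ _) _.
by rewrite ger0_norm ?vnorm_ge0 // mulrC ler_wpM2r // vnorm_ge0.
Qed.

Lemma tn_ge0 K z : 0 <= tn p K z.
Proof. exact: vnorm_ge0. Qed.

Lemma tn_coord K z i : (i < K)%N -> `|z i| <= tn p K z.
Proof. by move=> h; have := vnorm_coord (\col_(i < K) z i) (Ordinal h); rewrite mxE. Qed.

Lemma tn_triangle K f g : tn p K (fun i => f i + g i) <= tn p K f + tn p K g.
Proof.
rewrite /tn; have -> : \col_(i < K) (f i + g i) = \col_(i < K) f i + \col_(i < K) g i.
  by apply/matrixP => i j; rewrite !mxE.
exact: vnorm_triangle.
Qed.

Lemma tn_le K K' f g : (forall i, (i < K)%N -> `|f i| <= `|g i| /\ ((i < K')%N \/ f i = 0)) ->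
  tn p K f <= tn p K' g.
Proof.
move=> h; case: pcases => [[r r1 ->]|->].
  have r0 : 0 < r by apply: lt_le_trans r1.
  rewrite /tn /vnorm; apply: powR_le; [by rewrite invr_ge0 ltW| |].
    by apply: sumr_ge0 => i _; exact: powR_ge0.
  under eq_bigr do rewrite mxE.
  under [X in _ <= X]eq_bigr do rewrite mxE.
  rewrite (big_ord_widen (maxn K K') (fun i => `|f i| `^ r)) ?leq_maxl //.
  rewrite (big_ord_widen (maxn K K') (fun i => `|g i| `^ r)) ?leq_maxr //.
  rewrite big_mkcond [X in _ <= X]big_mkcond /=.
  apply: ler_sum => i _; case: ifP => hK; last by case: ifP => _ //; exact: powR_ge0.
  have [h1 [h2|h2]] := h i hK.
    by rewrite h2; apply: powR_le => //; exact: ltW.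
  rewrite h2 normr0 powR0 ?gt_eqF //; case: ifP => _ //; exact: powR_ge0.
rewrite /tn /vnorm; apply: bigmax_le; first by apply: bigmax_ge0.
move=> i _; rewrite mxE; have [h1 [h2|h2]] := h i (ltn_ord i).
  apply: le_trans h1 _; have := le_bigmax 0 (fun j : 'I_K' => `|(\col_(i < K') g i) j 0|) (Ordinal h2).
  by rewrite mxE.
by rewrite h2 normr0; apply: bigmax_ge0.
Qed.

Lemma vnorm_tn {k} (v : 'cV[R]_k) : vnorm p v = tn p k (extend v).
Proof. by rewrite /tn col_extend. Qed.

Lemma tn_extend_le {k} (v : 'cV[R]_k) K : tn p K (extend v) <= vnorm p v.
Proof.
rewrite vnorm_tn; apply: tn_le => i hi; split => //.
by case: (ltnP i k) => h; [left|right; exact: extend_out].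
Qed.

Lemma vnorm_extend_eq {k k'} (v : 'cV[R]_k) (w : 'cV[R]_k') :
  (forall i, extend v i = extend w i) -> vnorm p v = vnorm p w.
Proof.
move=> h; apply/le_anti; rewrite !vnorm_tn; apply/andP; split; apply: tn_le => i hi;
  rewrite h; split => //; case: (ltnP i k') => h'; try (by left);
  try (by right; rewrite ?h; exact: extend_out);
  case: (ltnP i k) => h''; try (by left); right; rewrite -?h; exact: extend_out.
Qed.

Lemma tn_subC K f g : tn p K (fun i => f i - g i) = tn p K (fun i => g i - f i).
Proof.
by apply/le_anti/andP; split; apply: tn_le => i hi; rewrite distrC; split => //; left.
Qed.

Lemma tn_bound K z c : 0 <= c -> (forall i, (i < K)%N -> `|z i| <= c) ->
  tn p K z <= c * vnorm p (const_mx 1 : 'cV[R]_K).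
Proof.
move=> c0 h; apply: vnorm_const_bound => // i; rewrite mxE; exact: h.
Qed.

Lemma lp_le z C : 0 <= C -> (forall K, tn p K z <= C) -> (lpnorm p z <= C%:E)%E.
Proof.
move=> C0 h; case: pcases => [[r r1 pe]|pe]; last first.
  rewrite pe; apply: ge_ereal_sup => _ [i _ <-]; rewrite lee_fin.
  exact: le_trans (tn_coord _ _ _ (ltnSn i)) (h i.+1).
have r0 : 0 < r by apply: lt_le_trans r1.
rewrite pe in h *; rewrite /lpnorm.
have hs : (\sum_(0 <= i <oo) ((`|z i| `^ r)%:E) <= (C `^ r)%:E)%E.
  apply: lime_le; first by apply: is_cvg_nneseries => n _ _; rewrite lee_fin powR_ge0.
  apply: nearW => K; rewrite sumEFin lee_fin.
  move: (h K); rewrite /tn /= powRinv_leP //; last by apply: sumr_ge0 => i _; exact: powR_ge0.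
  by under eq_bigr do rewrite mxE; rewrite big_mkord.
have hs0 : (0 <= \sum_(0 <= i <oo) ((`|z i| `^ r)%:E))%E.
  by apply: nneseries_ge0 => n _ _; rewrite lee_fin powR_ge0.
move: hs hs0; case: (\sum_(0 <= i <oo) _)%E => [s| |] //.
by rewrite !lee_fin => hs hs0; rewrite powRinv_leP.
Qed.


End vn.
End S.

Section N.
Context {R : realType}.

Lemma relu_ge0 {k} (v : 'cV[R]_k) i : 0 <= relu v i 0.
Proof. by rewrite mxE le_max lexx orbT. Qed.

Lemma relu_lip (a c : R) : 0 <= a -> `|Num.max (a + c) 0 - a| <= `|c|.
Proof.
move=> a0; case: (boolP (0 <= a + c)) => h.
  by rewrite max_l // addrC addKr.
rewrite -ltNge in h; have h' := ltW h.
rewrite max_r // sub0r normrN ger0_norm // ler0_norm; lra.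
Qed.

Lemma extendB {k} (u v : 'cV[R]_k) i : extend (u - v) i = extend u i - extend v i.
Proof. by rewrite /extend; case: insubP => [j _ _|_]; rewrite ?mxE ?subr0. Qed.

Lemma Imat_extend {m' m} (v : 'cV[R]_m) : (m <= m')%N ->
  forall j, extend (Imat m' m *m v) j = extend v j.
Proof.
move=> hm j; case: (ltnP j m') => hj; last first.
  by rewrite !extend_out // (leq_trans hm hj).
rewrite extend_in mxE; case: (ltnP j m) => hjm.
  rewrite extend_in (bigD1 (Ordinal hjm)) //= big1 ?addr0.
    by rewrite mxE /= eqxx mul1r.
  move=> l hl; rewrite mxE /=; case: eqP => [e|]; last by rewrite mul0r.
  by move: hl; rewrite -(inj_eq val_inj) /= e eqxx.
rewrite extend_out // big1 // => l _; rewrite mxE /=; case: eqP => [e|]; last by rewrite mul0r.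
by move: (ltn_ord l); rewrite -e ltnNge hjm.
Qed.

Lemma Imat_ge0 {m' m} (v : 'cV[R]_m) : (forall i, 0 <= v i 0) ->
  forall i, 0 <= (Imat m' m *m v) i 0.
Proof.
move=> h i; rewrite mxE; apply: sumr_ge0 => j _; rewrite mxE mulr_ge0 //.
Qed.

End N.

Section N2.
Context {R : realType}.

Lemma psum_le (u : nat -> R) : (forall n, 0 <= u n) ->
  (\sum_(0 <= n <oo) (u n)%:E < +oo)%E -> exists C, forall n, \sum_(0 <= k < n) u k <= C.
Proof.
move=> u0 hu; set S := (\sum_(0 <= n <oo) (u n)%:E)%E in hu.
have S0 : (0 <= S)%E by apply: nneseries_ge0 => n _ _; rewrite lee_fin.
exists (fine S) => n.
have := @nneseries_lim_ge R (fun k => (u k)%:E) xpredT 0 n (fun k _ _ => u0 k).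
rewrite -/S sumEFin -(@fineK _ S) ?lee_fin //.
by rewrite ge0_fin_numE.
Qed.

Lemma opnorm_ge0 {m n} (p : \bar R) (A : 'M[R]_(m, n)) (hp : (1 <= p)%E) : 0 <= opnorm p A.
Proof.
rewrite /opnorm; set E := [set _ | _ in _].
have [hs|hs] := pselect (has_sup E); last by rewrite sup_out.
have h0 : E (vnorm p (A *m 0)) by exists 0 => //=; rewrite (vnorm0 hp).
by have := ub_le_sup hs.2 h0; rewrite mulmx0 (vnorm0 hp).
Qed.

End N2.

Section N3.
Context {R : realType}.
Import numFieldNormedType.Exports.

Lemma lpnorm_ge0 (p : \bar R) z : (0 <= lpnorm p z)%E.
Proof.
case: p => [r| |] /=; first exact: poweR_ge0.
  by apply: le_ereal_sup_tmp; exists `|z 0%N|%:E; [exists 0%N|rewrite lee_fin].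
by apply: le_ereal_sup_tmp; exists `|z 0%N|%:E; [exists 0%N|rewrite lee_fin].
Qed.

Lemma cvg_sum0 {I : Type} (s : seq I) (h : I -> nat -> R) :
  (forall i, h i @ \oo --> 0) -> (fun k => \sum_(i <- s) h i k) @ \oo --> 0.
Proof.
move=> hh; elim: s => [|i s IH].
  under eq_fun do rewrite big_nil; exact: cvg_cst.
under eq_fun do rewrite big_cons.
have H : (h i + (fun k => \sum_(j <- s) h j k)) @ \oo --> 0 + 0 by apply: cvgD.
by rewrite addr0 in H.
Qed.

End N3.

Import numFieldNormedType.Exports.

Theorem theorem5p2 (R : realType) (p : \bar R) (m : nat -> nat)
  (W : forall n, 'M[R]_(m n.+1, m n)) (b : forall n, 'cV[R]_(m n.+1))
  (P : forall n, 'M[R]_(m n.+1, m n)) :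
  (1 <= p)%E ->
  (forall n, (0 < m n.+1)%N) ->
  (forall n, (m n <= m n.+1)%N) ->
  (forall n, W n = Imat (m n.+1) (m n) + P n) ->
  (\sum_(0 <= n <oo) ((opnorm p (P n))%:E) < +oo)%E ->
  (\sum_(0 <= n <oo) ((vnorm p (b n))%:E) < +oo)%E ->
  forall x : 'cV[R]_(m 0%N), (forall i, 0 <= x i 0 <= 1) ->
  exists y : nat -> R, (lpnorm p y < +oo)%E /\
    ((fun n => lpnorm p (fun i => extend (network W b x n) i - y i)) @ \oo
       --> 0%E).
Proof.
move=> hp _ hmono hW hP hb x hx.
pose N := network W b x.
pose E n := extend (N n).
pose c n := opnorm p (P n).
pose be n := vnorm p (b n).
pose D n := N n.+1 - Imat (m n.+1) (m n) *m N n.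
pose d n := vnorm p (D n).
have c0 n : 0 <= c n by exact: opnorm_ge0.
have be0 n : 0 <= be n by exact: vnorm_ge0.
have d0 n : 0 <= d n by exact: vnorm_ge0.
have Nge0 n i : 0 <= N n i 0.
  by case: n i => [|n] i; [case/andP: (hx i)|exact: relu_ge0].
have hd n : d n <= c n * vnorm p (N n) + be n.
  apply: (@le_trans _ _ (vnorm p (P n *m N n + b n))).
    apply: vnorm_mono => // i.
    rewrite /D /N /= -/(N n) hW mulmxDl -addrA !mxE.
    apply: relu_lip; have := @Imat_ge0 _ (m n.+1) _ (N n) (Nge0 n) i; rewrite !mxE.
    done.
  apply: le_trans (vnorm_triangle hp _ _) _; rewrite lerD2r.
  exact: opnorm_bound.
have hNv n : vnorm p (N n.+1) <= (1 + c n) * vnorm p (N n) + be n.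
  have -> : N n.+1 = Imat (m n.+1) (m n) *m N n + D n by rewrite /D addrC subrK.
  apply: le_trans (vnorm_triangle hp _ _) _.
  rewrite (vnorm_extend_eq hp _ _ (Imat_extend _ (hmono n))) -/(d n).
  have := hd n; rewrite mulrDl mul1r; lra.
have [Cc hCc] := psum_le c c0 hP.
have [Bb hBb] := psum_le be be0 hb.
pose M := (vnorm p x + Bb) * expR Cc.
have hM n : vnorm p (N n) <= M.
  have h1 : vnorm p (N n) <= (vnorm p x + \sum_(0 <= k < n) be k) * \prod_(0 <= k < n) (1 + c k).
    elim: n => [|n IH]; first by rewrite !big_nil addr0 mulr1.
    rewrite !big_nat_recr //=.
    have hpi : 1 <= \prod_(0 <= k < n) (1 + c k).
      by elim/big_ind: _ => // [a b1 ha hb1|k _]; [rewrite -[1]mulr1 ler_pM | rewrite lerDl].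
    apply: le_trans (hNv n) _.
    have h2 : 0 <= (1 + c n) * ((vnorm p x + \sum_(0 <= k < n) be k) * \prod_(0 <= k < n) (1 + c k) - vnorm p (N n)).
      by rewrite mulr_ge0 ?subr_ge0 // addr_ge0.
    have h3 : 0 <= be n * (\prod_(0 <= k < n) (1 + c k) * (1 + c n) - 1).
      by rewrite mulr_ge0 // subr_ge0; have := ler_pM ler01 ler01 hpi (_ : 1 <= 1 + c n); rewrite mulr1; apply; rewrite lerDl.
    move: h2 h3; set X := vnorm p x; set S := \sum_(_ <= _ < _) _; set Q := \prod_(_ <= _ < _) _.
    move=> h2 h3; nra.
  apply: le_trans h1 _; apply: ler_pM.
  - by rewrite addr_ge0 ?vnorm_ge0 // sumr_ge0.
  - by apply: prodr_ge0 => k _; rewrite addr_ge0.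
  - by rewrite lerD2l hBb.
  apply: le_trans (_ : expR (\sum_(0 <= k < n) c k) <= _); last by rewrite ler_expR.
  rewrite expR_sum; apply: ler_prod => k _; rewrite addr_ge0 //=; exact: expR_ge1Dx.
have hd' n : d n <= c n * M + be n.
  apply: le_trans (hd n) _; rewrite lerD2r ler_wpM2l //.
pose Sd n := \sum_(0 <= k < n) d k.
have SdS n : Sd n.+1 = Sd n + d n by rewrite /Sd big_nat_recr.
have Sd_nd : nondecreasing_seq Sd.
  by apply/nondecreasing_seqP => n; rewrite SdS lerDl.
have Sd_ub : has_ubound (range Sd).
  exists (Cc * M + Bb) => _ [n _ <-].
  apply: (@le_trans _ _ (\sum_(0 <= k < n) (c k * M + be k))); first by apply: ler_sum => k _.
  rewrite big_split /= -mulr_suml lerD ?hBb // ler_wpM2r ?hCc //.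
  by apply: le_trans (hM 0%N); apply: vnorm_ge0.
pose L : R := sup (range Sd).
have SdL : Sd @ \oo --> L by apply: nondecreasing_cvgn.
have SdleL k : Sd k <= L by apply: ub_le_sup => //; exists k.
have hED k i : E k.+1 i - E k i = extend (D k) i.
  by rewrite /E /D extendB Imat_extend.
have tele n k : (n <= k)%N -> forall K, tn p K (fun i => E k i - E n i) <= Sd k - Sd n.
  move=> hnk K; elim: k hnk => [|k IH].
    rewrite leqn0 => /eqP ->; rewrite subrr.
    apply: le_trans (tn_bound hp _ _ 0 (lexx 0) _) _; last by rewrite mul0r.
    by move=> i _; rewrite subrr normr0.
  rewrite leq_eqVlt => /orP[/eqP ->|hnk].
    rewrite subrr; apply: le_trans (tn_bound hp _ _ 0 (lexx 0) _) _; last by rewrite mul0r.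
    by move=> i _; rewrite subrr normr0.
  have -> : (fun i => E k.+1 i - E n i) = (fun i => (E k.+1 i - E k i) + (E k i - E n i)).
    by apply/funext => i; rewrite addrA subrK.
  apply: le_trans (tn_triangle hp _ _ _) _.
  have -> : Sd k.+1 - Sd n = d k + (Sd k - Sd n) by rewrite SdS; ring.
  rewrite lerD ?IH //.
  under eq_fun do rewrite hED.
  exact: tn_extend_le.
have hEc k j : `|E k j| <= M.
  apply: le_trans (tn_coord hp _ (E k) _ (ltnSn j)) _.
  exact: le_trans (tn_extend_le hp _ _) (hM k).
have hEd k j : `|E k.+1 j - E k j| <= d k.
  apply: le_trans (tn_coord hp _ (fun i => E k.+1 i - E k i) _ (ltnSn j)) _.
  by have := tele k k.+1 (leqnSn k) j.+1; rewrite SdS addrC addKr.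
pose u j k := E k j + Sd k.
have u_nd j : nondecreasing_seq (u j).
  apply/nondecreasing_seqP => k; rewrite /u SdS.
  have := hEd k j; rewrite ler_norml => /andP[h1 _]; lra.
have u_ub j : has_ubound (range (u j)).
  exists (M + L) => _ [k _ <-]; rewrite /u lerD //.
  exact: le_trans (ler_norm _) (hEc k j).
pose y j := sup (range (u j)) - L.
have Ecvg j : (fun k => E k j) @ \oo --> y j.
  have H : (u j - Sd) @ \oo --> sup (range (u j)) - L.
    by apply: cvgB => //; apply: nondecreasing_cvgn.
  have -> : (fun k => E k j) = u j - Sd by apply/funext => k; rewrite /= /u addrK.
  exact: H.
have key n K : tn p K (fun i => E n i - y i) <= L - Sd n.
  pose c1 := vnorm p (const_mx 1 : 'cV[R]_K).
  pose g k := \sum_(i < K) `|E k i - y i|.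
  have g0 : g @ \oo --> 0.
    apply: (cvg_sum0 (index_enum 'I_K) (fun i k => `|E k i - y i|)) => i.
    have H : (fun k => `|E k i - y i|) @ \oo --> `|y i - y i|.
      by apply: cvg_norm; apply: cvgB => //; exact: cvg_cst.
    by rewrite subrr normr0 in H.
  have hbd k : (n <= k)%N -> tn p K (fun i => E n i - y i) <= (L - Sd n) + g k * c1.
    move=> hnk.
    have -> : (fun i => E n i - y i) = (fun i => (E n i - E k i) + (E k i - y i)).
      by apply/funext => i; rewrite addrA subrK.
    apply: le_trans (tn_triangle hp _ _ _) _; apply: lerD.
      rewrite tn_subC //; apply: le_trans (tele n k hnk K) _; rewrite lerD2r; exact: SdleL.
    apply: (tn_bound hp) => [|i hi]; first by apply: sumr_ge0.
    rewrite /g (bigD1 (Ordinal hi)) //= lerDl; exact: sumr_ge0.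
  have H : (fun k => (L - Sd n) + g k * c1) @ \oo --> (L - Sd n) + 0 * c1.
    by apply: cvgD; [exact: cvg_cst | exact: cvgMr_tmp].
  rewrite mul0r addr0 in H.
  apply: (cvgr_to_ge H).
  by near=> k; apply: hbd; near: k; exact: nbhs_infty_ge.
have Sd0 : Sd 0%N = 0 by rewrite /Sd big_nil.
exists y; split.
  have Lx : 0 <= L + vnorm p x by rewrite addr_ge0 ?vnorm_ge0 // -Sd0 SdleL.
  apply: le_lt_trans (ltry (L + vnorm p x)).
  apply: (lp_le hp _ _ Lx) => K.
  have -> : y = (fun i => (y i - E 0%N i) + E 0%N i) by apply/funext => i; rewrite subrK.
  apply: le_trans (tn_triangle hp _ _ _) _; apply: lerD.
    by rewrite tn_subC // -[L](subr0 L) -Sd0 key.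
  exact: tn_extend_le.
apply: (@squeeze_cvge _ _ _ _ (fun=> 0%E) _ (fun n => (L - Sd n)%:E)).
- apply: nearW => n; rewrite lpnorm_ge0 /=.
  apply: (lp_le hp); first by rewrite subr_ge0 SdleL.
  exact: key.
- exact: cvg_cst.
apply: cvg_EFin; first by apply: nearW.
have H : (fun n => L - Sd n) @ \oo --> L - L by apply: cvgB => //; exact: cvg_cst.
by rewrite subrr in H.
Unshelve. all: by end_near.
Qed.
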